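(* Let $\mathbb{L}_0$ and $\mathbb{L}_1$ be generators of Lindblad form on $M_d(\mathbb{C})$ and, for $\varepsilon\ge 0$, let $\mathbb{L}_\varepsilon=\mathbb{L}_0+\varepsilon\,\mathbb{L}_1$, generating the semigroup $\gamma^{(\varepsilon)}_t=e^{t\mathbb{L}_\varepsilon}$. Let $n(\varepsilon)$ denote the maximal number of mutually orthogonal density matrices $\rho_1,\dots,\rho_n$ (i.e. $\rho_j\rho_k=0$ for $j\neq k$) that are $\gamma^{(\varepsilon)}_t$-invariant, i.e. satisfy $\mathbb{L}_\varepsilon[\rho_j]=0$. Then $n(0)\ge n(\varepsilon)$ for all $\varepsilon$ with $0<\varepsilon\ll 1$ (i.e. for all sufficiently small $\varepsilon>0$).
   Context: A generator of Lindblad form on $M_d(\mathbb{C})$ is a linear map $\mathbb{L}[\rho]=-i[H,\rho]+\sum_\alpha\big(h_\alpha\rho h_\alpha^\dagger-\tfrac12\{h_\alpha^\dagger h_\alpha,\rho\}\big)$ with $H=H^\dagger\in M_d(\mathbb{C})$ and $h_\alpha\in M_d(\mathbb{C})$; it generates a semigroup $e^{t\mathbb{L}}$ of completely positive trace-preserving maps. A density matrix is a positive semidefinite matrix of trace one. *)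

(* Defs.v *)
From HB Require Import structures.
From mathcomp Require Import all_boot all_order all_algebra.
From mathcomp Require Import complex.
From mathcomp Require Import boolp reals.
Set Implicit Arguments. Unset Strict Implicit. Unset Printing Implicit Defensive.
Import Order.TTheory GRing.Theory Num.Theory.
Local Open Scope ring_scope.
Local Open Scope complex_scope.

Section Defs.
Variable R : realType.
Local Notation C := (R[i]).

Definition adj d (A : 'M[C]_d) : 'M[C]_d := (map_mx Num.conj A)^T.

Definition hermitian d (A : 'M[C]_d) : Prop := adj A = A.

Definition psd d (A : 'M[C]_d) : Prop :=
  hermitian A /\ forall v : 'cV[C]_d, 0 <= ((map_mx Num.conj v)^T *m A *m v) 0 0.

Definition density d (rho : 'M[C]_d) : Prop := psd rho /\ \tr rho = 1.

Definition lindblad_form d (L : 'M[C]_d -> 'M[C]_d) : Prop :=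
  exists (H : 'M[C]_d) (hs : seq 'M[C]_d), hermitian H /\
    forall rho : 'M[C]_d,
      L rho = - 'i *: (H *m rho - rho *m H)
              + \sum_(h <- hs) (h *m rho *m adj h
                   - (1/2) *: (adj h *m h *m rho + rho *m (adj h *m h))).

Definition orth_invariant_family d (L : 'M[C]_d -> 'M[C]_d) (k : nat) : Prop :=
  exists rho : 'I_k -> 'M[C]_d,
    (forall j, density (rho j)) /\ (forall j, L (rho j) = 0) /\
    (forall j l, j != l -> rho j *m rho l = 0).

(* Such a family always has at most d members (orthogonal nonzero PSD matrices),
   so maximizing over k <= d gives the true maximum. *)
Definition nmax d (L : 'M[C]_d -> 'M[C]_d) : nat :=
  \max_(k < d.+1 | `[< orth_invariant_family L k >]) k.

Definition pert d (L0 L1 : 'M[C]_d -> 'M[C]_d) (eps : R) : 'M[C]_d -> 'M[C]_d :=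
  fun rho => L0 rho + (eps%:C) *: L1 rho.

End Defs.

(* Main.v *)
Require Import Defs.
From HB Require Import structures.
From mathcomp Require Import all_boot all_order all_algebra.
From mathcomp Require Import complex.
From mathcomp Require Import boolp reals.
From mathcomp Require Import classical_sets topology normedtype sequences.
From mathcomp Require Import lra.
Import Order.TTheory GRing.Theory Num.Theory.
Import numFieldNormedType.Exports.
Local Open Scope ring_scope.
Local Open Scope complex_scope.
Local Open Scope classical_set_scope.
Set Implicit Arguments. Unset Strict Implicit. Unset Printing Implicit Defensive.
Section S.
Variable R : realType.
Local Notation C := (R[i]).

Definition ccvg (u : nat -> C) (z : C) : Prop :=
  (fun n => complex.Re (u n)) @ \oo --> complex.Re z /\ (fun n => complex.Im (u n)) @ \oo --> complex.Im z.

Lemma ccvg_ext u v z : ccvg u z -> (forall n, u n = v n) -> ccvg v z.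
Proof. by move=> h /funext <-. Qed.

Lemma ccvg_cst c : ccvg (fun=> c) c.
Proof. by split; apply: cvg_cst. Qed.

Lemma ccvgD u v z w : ccvg u z -> ccvg v w -> ccvg (fun n => u n + v n) (z + w).
Proof.
case=> [u1 u2] [v1 v2]; split.
- have -> : (fun n => complex.Re (u n + v n)) = (fun n => complex.Re (u n) + complex.Re (v n)).
    by apply/funext => n; case: (u n); case: (v n).
  have -> : complex.Re (z + w) = complex.Re z + complex.Re w by case: (z); case: (w).
  exact: (cvgD u1 v1).
- have -> : (fun n => complex.Im (u n + v n)) = (fun n => complex.Im (u n) + complex.Im (v n)).
    by apply/funext => n; case: (u n); case: (v n).
  have -> : complex.Im (z + w) = complex.Im z + complex.Im w by case: (z); case: (w).
  exact: (cvgD u2 v2).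
Qed.

Lemma ccvgN u z : ccvg u z -> ccvg (fun n => - u n) (- z).
Proof.
case=> [u1 u2]; split.
- have -> : (fun n => complex.Re (- u n)) = (fun n => - complex.Re (u n)).
    by apply/funext => n; case: (u n).
  have -> : complex.Re (- z) = - complex.Re z by case: (z).
  exact: (cvgN u1).
- have -> : (fun n => complex.Im (- u n)) = (fun n => - complex.Im (u n)).
    by apply/funext => n; case: (u n).
  have -> : complex.Im (- z) = - complex.Im z by case: (z).
  exact: (cvgN u2).
Qed.

Lemma ReM (x y : C) : complex.Re (x * y) = complex.Re x * complex.Re y - complex.Im x * complex.Im y.
Proof. by case: x; case: y. Qed.
Lemma ImM (x y : C) : complex.Im (x * y) = complex.Re x * complex.Im y + complex.Im x * complex.Re y.
Proof. by case: x; case: y. Qed.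

Lemma ccvgM u v z w : ccvg u z -> ccvg v w -> ccvg (fun n => u n * v n) (z * w).
Proof.
case=> [u1 u2] [v1 v2]; split.
- have -> : (fun n => complex.Re (u n * v n)) =
     (fun n => complex.Re (u n) * complex.Re (v n) - complex.Im (u n) * complex.Im (v n)).
    by apply/funext => n; rewrite ReM.
  rewrite ReM; exact: (cvgB (cvgM u1 v1) (cvgM u2 v2)).
- have -> : (fun n => complex.Im (u n * v n)) =
     (fun n => complex.Re (u n) * complex.Im (v n) + complex.Im (u n) * complex.Re (v n)).
    by apply/funext => n; rewrite ImM.
  rewrite ImM; exact: (cvgD (cvgM u1 v2) (cvgM u2 v1)).
Qed.

Lemma ccvgJ u z : ccvg u z -> ccvg (fun n => Num.conj (u n)) (Num.conj z).
Proof.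
case=> [u1 u2]; split.
- have -> : (fun n => complex.Re (Num.conj (u n))) = (fun n => complex.Re (u n)).
    by apply/funext => n; case: (u n).
  by case: z u1 u2.
- have -> : (fun n => complex.Im (Num.conj (u n))) = (fun n => - complex.Im (u n)).
    by apply/funext => n; case: (u n).
  have -> : complex.Im (Num.conj z) = - complex.Im z by case: (z).
  exact: (cvgN u2).
Qed.

Lemma ccvg_sum (I : Type) (r : seq I) (P : pred I) (F : nat -> I -> C) (G : I -> C) :
  (forall i, P i -> ccvg (fun n => F n i) (G i)) ->
  ccvg (fun n => \sum_(i <- r | P i) F n i) (\sum_(i <- r | P i) G i).
Proof.
move=> HF; elim: r => [|i r IH].
  rewrite big_nil; apply: (ccvg_ext (ccvg_cst 0)) => n; by rewrite big_nil.
rewrite big_cons; case Pi: (P i).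
  apply: (ccvg_ext (ccvgD (HF i Pi) IH)) => n; by rewrite big_cons Pi.
apply: (ccvg_ext IH) => n; by rewrite big_cons Pi.
Qed.

Lemma ccvg_sumT (I : Type) (r : seq I) (F : nat -> I -> C) (G : I -> C) :
  (forall i, ccvg (fun n => F n i) (G i)) ->
  ccvg (fun n => \sum_(i <- r) F n i) (\sum_(i <- r) G i).
Proof. move=> h; exact: (@ccvg_sum I r (fun _ => true) F G (fun i _ => h i)). Qed.

Lemma rcvg_unique (u : nat -> R) (a b : R) : u @ \oo --> a -> u @ \oo --> b -> a = b.
Proof. by move=> ha hb; exact: (cvg_unique _ ha hb). Qed.

Lemma ccvg_unique u z w : ccvg u z -> ccvg u w -> z = w.
Proof.
case=> [u1 u2] [v1 v2].
move: (rcvg_unique u1 v1) (rcvg_unique u2 v2).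
by case: z {u1 u2} => a b; case: w {v1 v2} => c e /= -> ->.
Qed.

Lemma ccvg_eq u z c : (forall n, u n = c) -> ccvg u z -> z = c.
Proof. move=> Hu h; apply: ccvg_unique h (ccvg_ext (ccvg_cst c) _) => n; by rewrite Hu. Qed.

Lemma ccvg_ge0 u z : (forall n, 0 <= u n) -> ccvg u z -> 0 <= z.
Proof.
move=> Hu [u1 u2]; rewrite lecE; apply/andP; split.
  have Him : (fun n => complex.Im (u n)) = (fun=> 0).
    apply/funext => n; move: (Hu n); rewrite lecE => /andP[/eqP -> _] //.
  rewrite Him in u2; by rewrite (rcvg_unique u2 (cvg_cst 0)).
rewrite -(cvg_lim (@Rhausdorff R) u1) /=.
apply: limr_ge; first by apply/cvg_ex; exists (complex.Re z).
apply: nearW => n; move: (Hu n); rewrite lecE => /andP[_ ->] //.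
Qed.


Definition mcvg m n (A : nat -> 'M[C]_(m, n)) (B : 'M[C]_(m, n)) : Prop :=
  forall i j, ccvg (fun k => A k i j) (B i j).

Lemma mcvg_ext m n (A A' : nat -> 'M[C]_(m, n)) B :
  mcvg A B -> (forall k, A k = A' k) -> mcvg A' B.
Proof. by move=> h /funext <-. Qed.

Lemma mcvg_cst m n (B : 'M[C]_(m, n)) : mcvg (fun=> B) B.
Proof. move=> i j; exact: ccvg_cst. Qed.

Lemma mcvgD m n (A A' : nat -> 'M[C]_(m, n)) B B' :
  mcvg A B -> mcvg A' B' -> mcvg (fun k => A k + A' k) (B + B').
Proof.
move=> h h' i j; rewrite mxE; apply: (ccvg_ext (ccvgD (h i j) (h' i j))) => k.
by rewrite mxE.
Qed.

Lemma mcvgN m n (A : nat -> 'M[C]_(m, n)) B :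
  mcvg A B -> mcvg (fun k => - A k) (- B).
Proof.
move=> h i j; rewrite mxE; apply: (ccvg_ext (ccvgN (h i j))) => k.
by rewrite mxE.
Qed.

Lemma mcvgB m n (A A' : nat -> 'M[C]_(m, n)) B B' :
  mcvg A B -> mcvg A' B' -> mcvg (fun k => A k - A' k) (B - B').
Proof. by move=> h h'; apply: mcvgD h (mcvgN h'). Qed.

Lemma mcvgZ m n (s : nat -> C) c (A : nat -> 'M[C]_(m, n)) B :
  ccvg s c -> mcvg A B -> mcvg (fun k => s k *: A k) (c *: B).
Proof.
move=> hs h i j; rewrite mxE; apply: (ccvg_ext (ccvgM hs (h i j))) => k.
by rewrite mxE.
Qed.

Lemma mcvg_mul m n p (A : nat -> 'M[C]_(m, n)) (A' : nat -> 'M[C]_(n, p)) B B' :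
  mcvg A B -> mcvg A' B' -> mcvg (fun k => A k *m A' k) (B *m B').
Proof.
move=> h h' i j; rewrite mxE.
apply: (ccvg_ext (ccvg_sumT (index_enum _) (F := fun k l => A k i l * A' k l j) _)).
  move=> l; exact: ccvgM (h i l) (h' l j).
by move=> k; rewrite mxE.
Qed.

Lemma mcvg_tr m n (A : nat -> 'M[C]_(m, n)) B :
  mcvg A B -> mcvg (fun k => (A k)^T) B^T.
Proof.
move=> h i j; rewrite mxE; apply: (ccvg_ext (h j i)) => k; by rewrite mxE.
Qed.

Lemma mcvg_conj m n (A : nat -> 'M[C]_(m, n)) B :
  mcvg A B -> mcvg (fun k => map_mx Num.conj (A k)) (map_mx Num.conj B).
Proof.
move=> h i j; rewrite mxE; apply: (ccvg_ext (ccvgJ (h i j))) => k; by rewrite mxE.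
Qed.

Lemma mcvg_adj n (A : nat -> 'M[C]_n) B : mcvg A B -> mcvg (fun k => adj (A k)) (adj B).
Proof. by move=> h; apply: mcvg_tr; apply: mcvg_conj. Qed.

Lemma mcvg_sum (I : Type) m n (r : seq I) (P : pred I) (F : nat -> I -> 'M[C]_(m, n)) G :
  (forall i, P i -> mcvg (fun k => F k i) (G i)) ->
  mcvg (fun k => \sum_(i <- r | P i) F k i) (\sum_(i <- r | P i) G i).
Proof.
move=> h i j; rewrite summxE.
apply: (ccvg_ext (ccvg_sum r (P := P) (F := fun k l => F k l i j) (G := fun l => G l i j) _)).
  move=> l Pl; exact: h.
by move=> k; rewrite summxE.
Qed.

Lemma mcvg_unique m n (A : nat -> 'M[C]_(m, n)) B B' : mcvg A B -> mcvg A B' -> B = B'.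
Proof. move=> h h'; apply/matrixP => i j; exact: ccvg_unique (h i j) (h' i j). Qed.

Lemma mcvg_eq m n (A : nat -> 'M[C]_(m, n)) B B' : (forall k, A k = B') -> mcvg A B -> B = B'.
Proof. move=> hA h; apply: mcvg_unique h (mcvg_ext (mcvg_cst B') _) => k; by rewrite hA. Qed.

Lemma mcvg_lindblad n (L : 'M[C]_n -> 'M[C]_n) (A : nat -> 'M[C]_n) B :
  lindblad_form L -> mcvg A B -> mcvg (fun k => L (A k)) (L B).
Proof.
move=> [H [hs [_ HL]]] h.
rewrite HL; apply: (mcvg_ext _ (fun k => esym (HL (A k)))).
apply: mcvgD.
  apply: mcvgZ (ccvg_cst _) _.
  by apply: mcvgB; [apply: mcvg_mul (mcvg_cst _) h | apply: mcvg_mul h (mcvg_cst _)].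
apply: mcvg_sum => hh _.
apply: mcvgB.
  by apply: mcvg_mul (mcvg_cst _); apply: mcvg_mul (mcvg_cst _) h.
apply: mcvgZ (ccvg_cst _) _.
by apply: mcvgD; [apply: mcvg_mul (mcvg_cst _) h | apply: mcvg_mul h (mcvg_cst _)].
Qed.

Lemma ccvg_tr n (A : nat -> 'M[C]_n) B : mcvg A B -> ccvg (fun k => \tr (A k)) (\tr B).
Proof.
move=> h; apply: (ccvg_ext (ccvg_sumT (index_enum _) (F := fun k i => A k i i) _)) => //.
Qed.


Definition qf d (A : 'M[C]_d) (u w : 'cV[C]_d) : C :=
  ((map_mx Num.conj u)^T *m A *m w) 0 0.

Lemma qfDl d (A : 'M[C]_d) u u' w : qf A (u + u') w = qf A u w + qf A u' w.
Proof. by rewrite /qf map_mxD linearD /= !mulmxDl mxE. Qed.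

Lemma qfDr d (A : 'M[C]_d) u w w' : qf A u (w + w') = qf A u w + qf A u w'.
Proof. by rewrite /qf mulmxDr mxE. Qed.

Lemma qfZl d (A : 'M[C]_d) t u w : qf A (t *: u) w = Num.conj t * qf A u w.
Proof. by rewrite /qf map_mxZ linearZ /= -!scalemxAl mxE. Qed.

Lemma qfZr d (A : 'M[C]_d) t u w : qf A u (t *: w) = t * qf A u w.
Proof. by rewrite /qf -scalemxAr mxE. Qed.

Lemma qf_delta d (A : 'M[C]_d) a b : qf A (delta_mx a 0) (delta_mx b 0) = A a b.
Proof.
rewrite /qf.
have -> : map_mx Num.conj (delta_mx a 0 : 'cV[C]_d) = delta_mx a 0.
  apply/matrixP => i j; by rewrite !mxE rmorph_nat.
rewrite trmx_delta -(rowE a A) -(colE b). by rewrite !mxE.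
Qed.

Lemma Re_sum (I : Type) (r : seq I) (P : pred I) (F : I -> C) :
  complex.Re (\sum_(i <- r | P i) F i) = \sum_(i <- r | P i) complex.Re (F i).
Proof.
elim: r => [|x r IH]; rewrite ?big_nil ?big_cons //.
case: (P x) => //; rewrite -IH.
by case: (F x) => ? ?; case: (\sum_(j <- r | P j) F j).
Qed.

Lemma density_bound d (A : 'M[C]_d) : density A ->
  forall a b, `|complex.Re (A a b)| <= 1 /\ `|complex.Im (A a b)| <= 1.
Proof.
move=> [[herm psdA] trA] a b.
have Q0 t : 0 <= complex.Re (A a a) + complex.Re (t * A a b)
    + complex.Re (Num.conj t * Num.conj (A a b))
    + complex.Re (Num.conj t * t * A b b).
  have := psdA (delta_mx a 0 + t *: delta_mx b 0).
  rewrite -/(qf A _ _) qfDl !qfDr !qfZl !qfZr !qf_delta.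
  have -> : A b a = Num.conj (A a b).
    by rewrite -{1}herm /adj !mxE.
  rewrite lecE => /andP[_]; rewrite mulrA.
  by case: (A a a) => ? ?; case: (A a b) => ? ?; case: (A b b) => ? ?; case: t => ? ? /=; rewrite !addrA.
have diag0 x : 0 <= complex.Re (A x x).
  have := psdA (delta_mx x 0); rewrite -/(qf A _ _) qf_delta lecE => /andP[_].
  by case: (A x x).
have diag1 x : complex.Re (A x x) <= 1.
  have : complex.Re (\tr A) = 1 by rewrite trA.
  rewrite /mxtrace Re_sum (bigD1 x) //= => <-.
  rewrite lerDl; apply: sumr_ge0 => y _; exact: diag0.
have s2 : complex.Re (A a a) + complex.Re (A b b) <= 2.
  by have := diag1 a; have := diag1 b; lra.
have Q1 := Q0 1; have Q2 := Q0 (-1); have Q3 := Q0 'i; have Q4 := Q0 (- 'i).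
move: Q1 Q2 Q3 Q4 s2.
case: (A a a) => a1 a2; case: (A b b) => b1 b2; case: (A a b) => c1 c2 /=.
rewrite !ler_norml.
move=> Q1 Q2 Q3 Q4 s2.
split; apply/andP; split; nra.
Qed.
End S.

Section BW.
Variable R : realType.

Lemma incr_ge (f : nat -> nat) : increasing_seq f -> forall n, (n <= f n)%N.
Proof.
move=> hf; elim=> [//|n IH].
have : (f n < f n.+1)%N.
  rewrite ltnNge; apply/negP => h.
  have : (n.+1 <= n)%N by rewrite -hf.
  by rewrite ltnn.
by apply: leq_ltn_trans.
Qed.

Lemma incr_comp (f g : nat -> nat) : increasing_seq f -> increasing_seq g ->
  increasing_seq (f \o g).
Proof. by move=> hf hg n m; exact: (etrans (hf _ _) (hg _ _)). Qed.

Lemma subseq_cvg (u : nat -> R) (l : R) (f : nat -> nat) :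
  increasing_seq f -> u @ \oo --> l -> (u \o f) @ \oo --> l.
Proof.
move=> hf hu; apply: cvg_comp hu.
move=> P [N _ HP]; exists N => // n /= hn; apply: HP => /=.
exact: leq_trans hn (incr_ge hf n).
Qed.

Lemma bw_multi (I : eqType) (s : seq I) (u : nat -> I -> R) (M : R) :
  (forall n i, `|u n i| <= M) ->
  exists2 f : nat -> nat, increasing_seq f &
    forall i, i \in s -> cvgn (fun n => u (f n) i).
Proof.
move=> hM; elim: s => [|i0 s [f hf IH]].
  by exists id => // n m.
have bnd : bounded_fun (fun n => u (f n) i0).
  exists M; split; rewrite ?num_real// => x mx z _.
  exact: le_trans (hM _ _) (ltW mx).
have [g hg cg] := bolzano_weierstrass bnd.
exists (f \o g); first exact: incr_comp.
move=> i; rewrite in_cons => /orP[/eqP -> //|ins].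
move/cvg_ex: (IH i ins) => [l hl].
apply/cvg_ex; exists l.
exact: (subseq_cvg hg hl).
Qed.
End BW.

Section Nmax.
Variable R : realType.
Local Notation C := (R[i]).

Lemma family_restrict d (L : 'M[C]_d -> 'M[C]_d) k k' :
  (k' <= k)%N -> orth_invariant_family L k -> orth_invariant_family L k'.
Proof.
move=> hle [rho [h1 [h2 h3]]].
exists (fun j => rho (widen_ord hle j)); split; [|split] => //.
move=> j l hjl; apply: h3; apply: contra hjl => /eqP hh.
by apply/eqP/val_inj; move: hh => /(congr1 val).
Qed.

Lemma nmax_gt d (L : 'M[C]_d -> 'M[C]_d) m :
  (m < nmax L)%N -> (m < d)%N /\ orth_invariant_family L m.+1.
Proof.
rewrite /nmax => hm.
have : ~~ (\max_(k < d.+1 | `[< orth_invariant_family L k >]) k <= m)%N by rewrite -ltnNge.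
move/bigmax_leqP => hn.
have [k /andP[/asboolP hk hkm]] : exists k : 'I_d.+1,
    `[< orth_invariant_family L k >] && (m < k)%N.
  apply: contrapT => hno; apply: hn => k hk; rewrite leqNgt; apply/negP => hkm.
  by apply: hno; exists k; rewrite hk.
split; first exact: leq_trans hkm (ltn_ord k).
exact: family_restrict hkm hk.
Qed.

Lemma nmax_ge d (L : 'M[C]_d -> 'M[C]_d) m :
  (m < d.+1)%N -> orth_invariant_family L m -> (m <= nmax L)%N.
Proof.
move=> hm hf; rewrite /nmax.
apply: (leq_bigmax_cond (Ordinal hm)) => /=.
exact/asboolP.
Qed.
End Nmax.

Theorem lemma1 (R : realType) (d : nat) (L0 L1 : 'M[R[i]]_d -> 'M[R[i]]_d) :
  lindblad_form L0 -> lindblad_form L1 ->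
  exists2 delta : R, 0 < delta &
    forall eps : R, 0 < eps -> eps < delta ->
      (nmax (pert L0 L1 eps) <= nmax L0)%N.
Proof.
move=> hL0 hL1.
set m := nmax L0.
apply: contrapT => Hno.
have He : forall n : nat, exists eps : R,
    0 < eps /\ eps < n.+1%:R^-1 /\ (m < nmax (pert L0 L1 eps))%N.
  move=> n; apply: contrapT => hn; apply: Hno.
  exists n.+1%:R^-1; first by rewrite invr_gt0 ltr0n.
  move=> eps e0 e1; rewrite leqNgt; apply/negP => hlt; apply: hn; exists eps.
  by split.
have [e He'] := boolp.choice He.
have Hfam : forall n, exists rho : 'I_m.+1 -> 'M[R[i]]_d,
    (forall j, density (rho j)) /\ (forall j, pert L0 L1 (e n) (rho j) = 0) /\
    (forall j l, j != l -> rho j *m rho l = 0).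
  by move=> n; have [_ [_ /nmax_gt [_ hf]]] := He' n; exact: hf.
have md : (m < d)%N by have [_ [_ /nmax_gt []]] := He' 0%N.
have [rho Hrho] := boolp.choice Hfam.
pose I : finType := ('I_m.+1 * 'I_d * 'I_d * bool)%type.
pose u (n : nat) (i : I) : R := let: (j, a, b, c) := i in
  if c then complex.Re (rho n j a b) else complex.Im (rho n j a b).
have hb : forall n i, `|u n i| <= 1.
  move=> n [[[j a] b] c]; have [hd _] := Hrho n.
  by have := density_bound (hd j) a b; case: c => /= [[]|[]].
have [f hf hcv] := bw_multi (enum I) hb.
pose lc i := lim ((fun n => u (f n) i) @ \oo).
have hl : forall i, (fun n => u (f n) i) @ \oo --> lc i.
  by move=> i; apply: hcv; rewrite mem_enum.
pose sig (j : 'I_m.+1) : 'M[R[i]]_d :=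
  \matrix_(a, b) ((lc (j, a, b, true)) +i* (lc (j, a, b, false)))%C.
have hs : forall j, mcvg (fun n => rho (f n) j) (sig j).
  move=> j a b; rewrite /sig mxE; split => /=.
    exact: (hl (j, a, b, true)).
  exact: (hl (j, a, b, false)).
have e0 : (fun n => e (f n)) @ \oo --> 0.
  apply: (subseq_cvg (u := e)) hf _.
  apply: (@squeeze_cvgr _ _ _ _ (fun=> 0) harmonic).
  - apply: nearW => n; have [h1 [h2 _]] := He' n.
    by rewrite (ltW h1) (ltW h2).
  - exact: cvg_cst.
  - exact: cvg_harmonic.
have ce : ccvg (fun n => (e (f n))%:C%C) 0.
  split => /=; [exact: e0 | exact: cvg_cst].
have fam : orth_invariant_family L0 m.+1.
  exists sig; split; [|split].
  - move=> j; split; [split|].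
    + have hadj : mcvg (fun n => adj (rho (f n) j)) (sig j).
        apply: (mcvg_ext (hs j)) => n; have [hd _] := Hrho (f n).
        by case: (hd j) => [[hh _] _]; rewrite hh.
      exact: (mcvg_unique (mcvg_adj (hs j)) hadj).
    + move=> v.
      apply: (ccvg_ge0 (u := fun n => qf (rho (f n) j) v v)).
        move=> n; have [hd _] := Hrho (f n); by case: (hd j) => [[_ ->] _].
      exact: (mcvg_mul (mcvg_mul (mcvg_cst _) (hs j)) (mcvg_cst v)).
    + apply: (ccvg_eq (u := fun n => \tr (rho (f n) j))) (ccvg_tr (hs j)).
      move=> n; have [hd _] := Hrho (f n); by case: (hd j).
  - move=> j.
    have h1 := mcvg_lindblad hL0 (hs j).
    have h2 : mcvg (fun n => L0 (rho (f n) j)) (- ((0 : R[i]) *: L1 (sig j))).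
      apply: (mcvg_ext (mcvgN (mcvgZ ce (mcvg_lindblad hL1 (hs j))))) => n.
      have [_ [hp _]] := Hrho (f n).
      by move/eqP: (hp j); rewrite /pert addr_eq0 => /eqP ->.
    by rewrite (mcvg_unique h1 h2) scale0r oppr0.
  - move=> j l hjl.
    apply: (mcvg_eq (A := fun n => rho (f n) j *m rho (f n) l)) (mcvg_mul (hs j) (hs l)).
    move=> n; have [_ [_ ho]] := Hrho (f n); exact: ho.
have := @nmax_ge R d L0 m.+1 md fam.
by rewrite ltnn.
Qed.
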